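(* Let $\Phi$ be an Orlicz function and $p$ a lattice norm on $\mathbb{R}^2$ with $p((1,0))=p((0,1))=1$. If $x\in L^\Phi(\mu)$ satisfies $I_\Phi(\lambda x)=+\infty$ for every $\lambda>1$, then $$1\le \|x\|_{\Phi,p}\le 1+I_\Phi(x).$$
   Context: $(\Omega,\Sigma,\mu)$ is a $\sigma$-finite complete measure space, $L^0$ the space of (classes of a.e. equal) real measurable functions. An Orlicz function is a function $\Phi:\mathbb{R}\to[0,\infty)$ which is convex, even, vanishes at $0$ and is not identically zero. $I_\Phi(x)=\int_\Omega\Phi(x(t))\,d\mu\in[0,+\infty]$; $L^\Phi(\mu)=\{x\in L^0: I_\Phi(\lambda x)<\infty\text{ for some }\lambda>0\}$. A lattice norm on $\mathbb{R}^2$ is a norm $p$ with $p((u,v))\le p((u',v'))$ whenever $|u|\le|u'|,|v|\le|v'|$. For such $p$ with $p((1,0))=1$, $\|x\|_{\Phi,p}=\inf_{k>0}\frac1k p((1,I_\Phi(kx)))$ for $x\in L^\Phi(\mu)$, with the convention $p((1,+\infty))=+\infty$. *)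

(* Defs.v *)
From Stdlib Require Import Reals Lra List ClassicalEpsilon.
Open Scope R_scope.

Inductive ER : Type := Fin (r : R) | PInf.

Definition ER_le (a b : ER) : Prop :=
  match a, b with
  | Fin x, Fin y => x <= y
  | _, PInf => True
  | PInf, Fin _ => False
  end.

Definition ER_add (a b : ER) : ER :=
  match a, b with
  | Fin x, Fin y => Fin (x + y)
  | _, _ => PInf
  end.

(* scalar multiplication by c >= 0, with the convention 0 * (+oo) = 0 *)
Definition ER_scal (c : R) (a : ER) : ER :=
  match a with
  | Fin x => Fin (c * x)
  | PInf => if Req_EM_T c 0 then Fin 0 else PInf
  end.

(* supremum of a nonempty bounded-above set of reals (0 otherwise) *)
Definition real_sup (E : R -> Prop) : R :=
  match excluded_middle_informative (bound E /\ exists x, E x) with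
  | left H => proj1_sig (completeness E (proj1 H) (proj2 H))
  | right _ => 0
  end.

(* supremum in [0,+oo] of a set of elements of [0,+oo] (empty sup = 0) *)
Definition ER_sup (S : ER -> Prop) : ER :=
  match excluded_middle_informative (S PInf \/ ~ bound (fun r => S (Fin r))) with
  | left _ => PInf
  | right _ => Fin (real_sup (fun r => S (Fin r)))
  end.

(* infimum in [0,+oo] of a set of elements of [0,+oo] (empty inf = +oo);
   only meaningful for sets of nonnegative values, which is the only use. *)
Definition ER_inf (S : ER -> Prop) : ER :=
  match excluded_middle_informative (exists r, S (Fin r)) with
  | left _ => Fin (- real_sup (fun r => S (Fin (- r))))
  | right _ => PInf
  end.

Fixpoint ER_partial (a : nat -> ER) (n : nat) : ER :=
  match n with
  | O => Fin 0
  | S m => ER_add (ER_partial a m) (a m)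
  end.

Definition ER_series (a : nat -> ER) : ER :=
  ER_sup (fun e => exists n, e = ER_partial a n).

Record measure_space (Omega : Type) := {
  measurable : (Omega -> Prop) -> Prop;
  mu : (Omega -> Prop) -> ER;
  meas_empty : measurable (fun _ => False);
  meas_compl : forall A, measurable A -> measurable (fun t => ~ A t);
  meas_union : forall A : nat -> Omega -> Prop,
      (forall n, measurable (A n)) -> measurable (fun t => exists n, A n t);
  mu_nonneg : forall A, ER_le (Fin 0) (mu A);
  mu_empty : mu (fun _ => False) = Fin 0;
  mu_sigma_additive : forall A : nat -> Omega -> Prop,
      (forall n, measurable (A n)) ->
      (forall n m t, n <> m -> A n t -> A m t -> False) ->
      mu (fun t => exists n, A n t) = ER_series (fun n => mu (A n));
  sigma_finite : exists A : nat -> Omega -> Prop,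
      (forall n, measurable (A n) /\ mu (A n) <> PInf) /\
      (forall t, exists n, A n t);
  mu_complete : forall A B, measurable B -> mu B = Fin 0 ->
      (forall t, A t -> B t) -> measurable A
}.
Arguments measurable {Omega} _ _.
Arguments mu {Omega} _ _.

(* real measurable functions (elements of L^0; we work with representatives,
   all notions below are invariant under a.e. equality) *)
Definition measurable_fun {Omega} (M : measure_space Omega) (x : Omega -> R) : Prop :=
  forall a : R, measurable M (fun t => a < x t).

Definition indic {Omega} (A : Omega -> Prop) (t : Omega) : R :=
  if excluded_middle_informative (A t) then 1 else 0.

Definition simple_val {Omega} (l : list (R * (Omega -> Prop))) (t : Omega) : R :=
  fold_right (fun ca acc => fst ca * indic (snd ca) t + acc) 0 l.

Definition simple_int {Omega} (M : measure_space Omega)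
  (l : list (R * (Omega -> Prop))) : ER :=
  fold_right (fun ca acc => ER_add (ER_scal (fst ca) (mu M (snd ca))) acc) (Fin 0) l.

Definition simple_ok {Omega} (M : measure_space Omega)
  (l : list (R * (Omega -> Prop))) : Prop :=
  forall ca, In ca l -> 0 <= fst ca /\ measurable M (snd ca).

Definition integral {Omega} (M : measure_space Omega) (g : Omega -> R) : ER :=
  ER_sup (fun e => exists l, simple_ok M l /\
            (forall t, simple_val l t <= g t) /\ e = simple_int M l).

Definition orlicz_function (Phi : R -> R) : Prop :=
  (forall u, 0 <= Phi u) /\
  (forall u v t, 0 <= t <= 1 ->
     Phi (t * u + (1 - t) * v) <= t * Phi u + (1 - t) * Phi v) /\
  (forall u, Phi (- u) = Phi u) /\
  Phi 0 = 0 /\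
  (exists u, Phi u <> 0).

Definition I_Phi {Omega} (M : measure_space Omega) (Phi : R -> R)
  (x : Omega -> R) : ER :=
  integral M (fun t => Phi (x t)).

Definition in_LPhi {Omega} (M : measure_space Omega) (Phi : R -> R)
  (x : Omega -> R) : Prop :=
  measurable_fun M x /\
  exists lam, 0 < lam /\ I_Phi M Phi (fun t => lam * x t) <> PInf.

Definition lattice_norm (p : R * R -> R) : Prop :=
  (forall u v, p (u, v) = 0 -> u = 0 /\ v = 0) /\
  (forall c u v, p (c * u, c * v) = Rabs c * p (u, v)) /\
  (forall u v u' v', p (u + u', v + v') <= p (u, v) + p (u', v')) /\
  (forall u v u' v', Rabs u <= Rabs u' -> Rabs v <= Rabs v' ->
     p (u, v) <= p (u', v')).

Definition p_ext (p : R * R -> R) (s : ER) : ER :=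
  match s with
  | Fin v => Fin (p (1, v))
  | PInf => PInf
  end.

Definition orlicz_norm {Omega} (M : measure_space Omega) (Phi : R -> R)
  (p : R * R -> R) (x : Omega -> R) : ER :=
  ER_inf (fun e => exists k, 0 < k /\
            e = ER_scal (/ k) (p_ext p (I_Phi M Phi (fun t => k * x t)))).

(* Main.v *)
Require Import Defs.
From Stdlib Require Import Reals Lra ClassicalEpsilon FunctionalExtensionality.
Open Scope R_scope.

Lemma real_sup_spec (E : R -> Prop) x : bound E -> E x -> is_lub E (real_sup E).
Proof.
  intros Hb Hx. unfold real_sup.
  destruct (excluded_middle_informative _) as [H|H].
  - destruct (completeness E _ _) as [s Hs]. exact Hs.
  - exfalso. apply H. split; eauto.
Qed.

Lemma integral_nonneg {Omega} (M : measure_space Omega) g :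
  (forall t, 0 <= g t) -> forall v, integral M g = Fin v -> 0 <= v.
Proof.
  intros Hg v. unfold integral, ER_sup.
  destruct (excluded_middle_informative _) as [H|H]; [discriminate|].
  intros E; injection E; intros <-.
  assert (Hb : bound (fun r => exists l, simple_ok M l /\
     (forall t, simple_val l t <= g t) /\ Fin r = simple_int M l)).
  { destruct (classic (bound (fun r => exists l, simple_ok M l /\
     (forall t, simple_val l t <= g t) /\ Fin r = simple_int M l))) as [B|B]; auto.
    exfalso; apply H; right; exact B. }
  assert (H0 : exists l, simple_ok M l /\
     (forall t, simple_val l t <= g t) /\ Fin 0 = simple_int M l).
  { exists nil. split; [intros ca []|]. split; [intros t; simpl; apply Hg|reflexivity]. }
  destruct (real_sup_spec _ _ Hb H0) as [Hu _]. apply Hu. exact H0.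
Qed.

Theorem lemma2 (Omega : Type) (M : measure_space Omega) (Phi : R -> R)
  (p : R * R -> R) :
  orlicz_function Phi -> lattice_norm p ->
  p (1, 0) = 1 -> p (0, 1) = 1 ->
  forall x : Omega -> R, in_LPhi M Phi x ->
  (forall lam, 1 < lam -> I_Phi M Phi (fun t => lam * x t) = PInf) ->
  ER_le (Fin 1) (orlicz_norm M Phi p x) /\
  ER_le (orlicz_norm M Phi p x) (ER_add (Fin 1) (I_Phi M Phi x)).
Proof.
  intros [Pnn _] [_ [Phom [Ptri Pmon]]] P10 P01 x _ Hinf.
  set (S := fun e => exists k, 0 < k /\
            e = ER_scal (/ k) (p_ext p (I_Phi M Phi (fun t => k * x t)))).
  assert (Hlow : forall r, S (Fin r) -> 1 <= r).
  { intros r [k [Hk E]].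
    destruct (Rle_lt_dec k 1) as [Hk1|Hk1].
    - destruct (I_Phi M Phi (fun t => k * x t)) as [v|] eqn:Ev; simpl in E.
      + injection E; intros ->.
        assert (1 <= p (1, v)).
        { eapply Rle_trans; [right; exact (eq_sym P10)|]. apply Pmon; [apply Rle_refl|rewrite Rabs_R0; apply Rabs_pos]. }
        assert (1 <= / k).
        { rewrite <- Rinv_1. apply Rinv_le_contravar; lra. }
        nra.
      + destruct (Req_EM_T (/k) 0) as [e|]; [|discriminate].
        exfalso; apply (Rinv_neq_0_compat k); lra.
    - rewrite (Hinf k Hk1) in E. simpl in E.
      destruct (Req_EM_T (/k) 0) as [e|]; [|discriminate].
      exfalso; apply (Rinv_neq_0_compat k); lra. }
  assert (Hb : bound (fun r => S (Fin (- r)))).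
  { exists (-1). intros r Hr. apply Hlow in Hr. lra. }
  unfold orlicz_norm; fold S. unfold ER_inf.
  destruct (excluded_middle_informative _) as [[r0 Hr0]|Hn].
  - assert (Hr0' : S (Fin (- - r0))) by (rewrite Ropp_involutive; exact Hr0).
    destruct (real_sup_spec _ _ Hb Hr0') as [Hu Hl].
    split.
    + simpl. assert (real_sup (fun r => S (Fin (- r))) <= -1).
      { apply Hl. intros r Hr. apply Hlow in Hr. lra. }
      lra.
    + destruct (I_Phi M Phi x) as [v|] eqn:Ev; simpl; [|exact I].
      assert (v0 : 0 <= v).
      { apply (integral_nonneg M (fun t => Phi (x t))); auto. }
      assert (HS : S (Fin (- - p (1, v)))).
      { rewrite Ropp_involutive. exists 1. split; [lra|].
        assert (E1 : (fun t => 1 * x t) = x).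
        { apply functional_extensionality; intro; ring. }
        rewrite E1, Ev. simpl. f_equal. rewrite Rinv_1; ring. }
      apply Hu in HS.
      assert (p (1, v) <= 1 + v).
      { replace (1, v) with (1 + 0, 0 + v) by (f_equal; ring).
        eapply Rle_trans; [apply Ptri|].
        replace (0, v) with (v * 0, v * 1) by (f_equal; ring).
        rewrite Phom, P01, Rabs_right; lra. }
      lra.
  - split; [exact I|].
    destruct (I_Phi M Phi x) as [v|] eqn:Ev; simpl; [|exact I].
    exfalso. apply Hn. exists (p (1, v)). exists 1. split; [lra|].
    assert (E1 : (fun t => 1 * x t) = x).
    { apply functional_extensionality; intro; ring. }
    rewrite E1, Ev. simpl. f_equal. rewrite Rinv_1; ring.
Qed.
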